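(* For either choice $\zeta\in\{q,-q^{3}\}$ (Fateev–Zamolodchikov or Izergin–Korepin model), the partition function $\mathcal{Z}(\lambda_1,\dots,\lambda_L)=\langle\bar 0|\mathcal{E}(\lambda_L)\cdots\mathcal{E}(\lambda_1)|0\rangle$ is a polynomial in the variables $x_i=e^{2\lambda_i}$ ($1\le i\le L$), symmetric under permutations of $\lambda_1,\dots,\lambda_L$, and of degree $2L-1$ in each variable $x_i$ separately.
   Context: Let $q\in\mathbb{C}\setminus\{0\}$ (with a fixed choice of $q^{1/2}$) and $\zeta\in\{q,-q^3\}$ ($\zeta=q$: Fateev–Zamolodchikov model; $\zeta=-q^3$: Izergin–Korepin model). For $\lambda\in\mathbb{C}$ put $x=e^{2\lambda}$ and define $a(\lambda)=(x-\zeta)(x-q^2)$, $b(\lambda)=q(x-1)(x-\zeta)$, $c(\lambda)=(1-q^2)(x-\zeta)$, $\bar c(\lambda)=x(1-q^2)(x-\zeta)$, and for $\alpha,\beta\in\{1,2,3\}$, with $\beta'=4-\beta$: $d_{\alpha,\beta}(\lambda)=q(x-1)(x-\zeta)+x(q^2-1)(\zeta-1)$ if $\alpha=\beta=2$; $d_{\alpha,\beta}(\lambda)=(x-1)[(x-\zeta)+x(q^2-1)]$ if $\alpha=\beta\neq 2$; $d_{\alpha,\beta}(\lambda)=(q^2-1)[\zeta(x-1)q^{(\alpha-\beta)/2}-\delta_{\alpha,\beta'}(x-\zeta)]$ if $\alpha<\beta$; $d_{\alpha,\beta}(\lambda)=x(q^2-1)[(x-1)q^{(\alpha-\beta)/2}-\delta_{\alpha,\beta'}(x-\zeta)]$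 if $\alpha>\beta$. Let $e_1,e_2,e_3$ be the standard basis of $\mathbb{C}^3$ and $E_{\alpha,\beta}$ the unit matrices. Define $\mathcal{R}(\lambda)\in\mathrm{End}(\mathbb{C}^3\otimes\mathbb{C}^3)$ as the $9\times 9$ matrix in the ordered basis $e_1\otimes e_1,e_1\otimes e_2,e_1\otimes e_3,e_2\otimes e_1,e_2\otimes e_2,e_2\otimes e_3,e_3\otimes e_1,e_3\otimes e_2,e_3\otimes e_3$ (indices $1,\dots,9$) whose only nonzero entries (row, column) are: $(1,1)=a$; $(2,2)=b$, $(2,4)=c$; $(3,3)=d_{1,1}$, $(3,5)=d_{1,2}$, $(3,7)=d_{1,3}$; $(4,2)=\bar c$, $(4,4)=b$; $(5,3)=d_{2,1}$, $(5,5)=d_{2,2}$, $(5,7)=d_{2,3}$; $(6,6)=b$, $(6,8)=c$; $(7,3)=d_{3,1}$, $(7,5)=d_{3,2}$, $(7,7)=d_{3,3}$; $(8,6)=\bar c$, $(8,8)=b$; $(9,9)=a$ (all evaluated at $\lambda$). Fix $L\ge1$ and inhomogeneities $\mu_1,\dots,\mu_L\in\mathbb{C}$. With $V_a=V_1=\dots=V_L=\mathbb{C}^3$, let $\mathcal{T}(\lambda)=\mathcal{R}_{a1}(\lambda-\mu_1)\mathcal{R}_{a2}(\lambda-\mu_2)\cdots\mathcal{R}_{aL}(\lambda-\mu_L)\in\mathrm{End}(V_a\otimes V_1\otimes\cdots\otimes V_L)$, where $\mathcal{R}_{aj}$ acts as $\mathcal{R}$ on $V_a\otimes V_j$. Write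 $\mathcal{T}(\lambda)=\sum_{\alpha,\beta}E_{\alpha,\beta}\otimes\mathcal{T}_\alpha^\beta(\lambda)$ and set $\mathcal{A}(\lambda)=\mathcal{T}_1^1(\lambda)$, $\mathcal{B}(\lambda)=\mathcal{T}_1^2(\lambda)$, $\mathcal{E}(\lambda)=\mathcal{T}_1^3(\lambda)$, operators on $V_1\otimes\cdots\otimes V_L$. Let $|0\rangle=e_1^{\otimes L}$ and let $\langle\bar0|$ be the dual vector of $e_3^{\otimes L}$ (taking the coefficient of $e_3^{\otimes L}$). *)

(* Defs.v *)
From HB Require Import structures.
From mathcomp Require Import all_boot all_order all_algebra all_fingroup.
From mathcomp Require Import mpoly.
Set Implicit Arguments.
Unset Strict Implicit.
Unset Printing Implicit Defensive.
Import GRing.Theory Num.Theory.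
Local Open Scope ring_scope.

(* Conventions: a spectral parameter lambda enters only through x = e^{2 lambda};
   an inhomogeneity mu_j enters through w_j = e^{2 mu_j} (nonzero), so that
   R(lambda - mu_j) is R evaluated at x / w_j.  Indices of C^3 are 0,1,2
   (standing for the paper's 1,2,3). *)

Section Model.
Variables (C : fieldType) (q qh zeta : C).
(* qh is the fixed square root q^{1/2} *)

Definition Ra (x : C) : C := (x - zeta) * (x - q ^+ 2).
Definition Rb (x : C) : C := q * (x - 1) * (x - zeta).
Definition Rc (x : C) : C := (1 - q ^+ 2) * (x - zeta).
Definition Rcbar (x : C) : C := x * (1 - q ^+ 2) * (x - zeta).

(* d_{al,be}, with al, be in {1,2,3} as in the paper; q^{(al-be)/2} = qh^(al-be) *)
Definition Rd (al be : nat) (x : C) : C :=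
  if (al == 2)%N && (be == 2)%N then
    q * (x - 1) * (x - zeta) + x * (q ^+ 2 - 1) * (zeta - 1)
  else if al == be then (x - 1) * ((x - zeta) + x * (q ^+ 2 - 1))
  else if (al < be)%N then
    (q ^+ 2 - 1) * (zeta * (x - 1) * qh ^ (al%:Z - be%:Z)
                    - (al == 4 - be)%N%:R * (x - zeta))
  else
    x * (q ^+ 2 - 1) * ((x - 1) * qh ^ (al%:Z - be%:Z)
                        - (al == 4 - be)%N%:R * (x - zeta)).

(* The 9x9 matrix R(lambda), with x = e^{2 lambda}; rows/columns numbered 0..8
   (the paper's 1..9 shifted by one). *)
Definition Rmat (x : C) (r c : nat) : C :=
  match r, c with
  | 0, 0 => Ra x
  | 1, 1 => Rb x | 1, 3 => Rc x
  | 2, 2 => Rd 1 1 x | 2, 4 => Rd 1 2 x | 2, 6 => Rd 1 3 x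
  | 3, 1 => Rcbar x | 3, 3 => Rb x
  | 4, 2 => Rd 2 1 x | 4, 4 => Rd 2 2 x | 4, 6 => Rd 2 3 x
  | 5, 5 => Rb x | 5, 7 => Rc x
  | 6, 2 => Rd 3 1 x | 6, 4 => Rd 3 2 x | 6, 6 => Rd 3 3 x
  | 7, 5 => Rcbar x | 7, 7 => Rb x
  | 8, 8 => Ra x
  | _, _ => 0
  end.

(* <e_a (x) e_i | R(x) | e_b (x) e_j> *)
Definition Rent (x : C) (a i b j : 'I_3) : C := Rmat x (3 * a + i) (3 * b + j).

(* Basis states of V_1 (x) ... (x) V_L, and operators as matrices on them *)
Definition state (L : nat) := {ffun 'I_L -> 'I_3}.
Definition op (L : nat) := state L -> state L -> C.
Definition opmul L (A B : op L) : op L := fun s t => \sum_(u : state L) A s u * B u t.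
Definition opid L : op L := fun s t => (s == t)%:R.

(* Entry T_al^be(lambda) of the monodromy matrix
   T(lambda) = R_{a1}(lambda-mu_1) ... R_{aL}(lambda-mu_L), as an operator on
   the quantum space: sum over auxiliary paths al = g_0, g_1, ..., g_L = be. *)
Definition Tent L (w : 'I_L -> C) (x : C) (al be : 'I_3) : op L :=
  fun s t =>
    \sum_(g : {ffun 'I_L.+1 -> 'I_3} | (g ord0 == al) && (g ord_max == be))
      \prod_(j < L) Rent (x / w j) (g (inord j)) (s j) (g (inord j.+1)) (t j).

Definition Eop L (w : 'I_L -> C) (x : C) : op L := Tent w x (inord 0) (inord 2).

Definition vac L : state L := [ffun _ => inord 0].
Definition dvac L : state L := [ffun _ => inord 2].

(* Z = <0bar| E(lambda_L) ... E(lambda_1) |0>, as a function of x_i = e^{2 lambda_i}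
   (x : 'I_L -> C, x i standing for x_{i+1}) *)
Definition PF L (w : 'I_L -> C) (x : 'I_L -> C) : C :=
  (\big[@opmul L/@opid L]_(i < L) Eop w (x (rev_ord i))) (dvac L) (vac L).

End Model.

(* Main.v *)
Require Import Defs.
From HB Require Import structures.
From mathcomp Require Import all_boot all_order all_algebra all_fingroup.
From mathcomp Require Import mpoly.
From mathcomp Require Import ring.
From mathcomp Require Import zify.
From Stdlib Require Import FunctionalExtensionality.
Import GRing.Theory Num.Theory.
Local Open Scope ring_scope.
Set Implicit Arguments.
Unset Strict Implicit.
Unset Printing Implicit Defensive.

Section Mat.
Variable C : comNzRingType.
Section M1.
Variable S : finType.
Definition mat := S -> S -> C.
Definition mmul (A B : mat) : mat := fun a b => \sum_c A a c * B c b.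
Definition mid : mat := fun a b => (a == b)%:R.
Definition mzero : mat := fun _ _ => 0.
Definition mscale (c : C) (A : mat) : mat := fun a b => c * A a b.
Definition msum (K : finType) (A : K -> mat) : mat := fun a b => \sum_k A k a b.

Lemma matP (A B : mat) : (forall a b, A a b = B a b) -> A = B.
Proof. move=> h; apply: functional_extensionality => a; apply: functional_extensionality => b; exact: h. Qed.

Lemma mmulA A B D : mmul A (mmul B D) = mmul (mmul A B) D.
Proof.
apply: matP => a b; rewrite /mmul.
under eq_bigr do rewrite mulr_sumr.
rewrite exchange_big /=; apply: eq_bigr => d _.
rewrite mulr_suml; apply: eq_bigr => c _; by rewrite mulrA.
Qed.

Lemma mmul1l A : mmul mid A = A.
Proof.
apply: matP => a b; rewrite /mmul /mid (bigD1 a) //= eqxx mul1r big1 ?addr0 //.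
by move=> c; rewrite eq_sym => /negbTE ->; rewrite mul0r.
Qed.

Lemma mmul1r A : mmul A mid = A.
Proof.
apply: matP => a b; rewrite /mmul /mid (bigD1 b) //= eqxx mulr1 big1 ?addr0 //.
by move=> c /negbTE ->; rewrite mulr0.
Qed.

Lemma mmul0l A : mmul mzero A = mzero.
Proof. by apply: matP => a b; rewrite /mmul big1 // => c _; rewrite mul0r. Qed.
Lemma mmul0r A : mmul A mzero = mzero.
Proof. by apply: matP => a b; rewrite /mmul big1 // => c _; rewrite mulr0. Qed.

Lemma mmul_msuml (K : finType) (A : K -> mat) B : mmul (msum A) B = msum (fun k => mmul (A k) B).
Proof.
apply: matP => a b; rewrite /mmul /msum.
under eq_bigr do rewrite mulr_suml.
by rewrite exchange_big.
Qed.

Lemma mmul_msumr (K : finType) A (B : K -> mat) : mmul A (msum B) = msum (fun k => mmul A (B k)).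
Proof.
apply: matP => a b; rewrite /mmul /msum.
under eq_bigr do rewrite mulr_sumr.
by rewrite exchange_big.
Qed.

Lemma mmul_scalel c A B : mmul (mscale c A) B = mscale c (mmul A B).
Proof. apply: matP => a b; rewrite /mmul /mscale mulr_sumr; apply: eq_bigr => d _; by rewrite mulrA. Qed.
Lemma mmul_scaler c A B : mmul A (mscale c B) = mscale c (mmul A B).
Proof. apply: matP => a b; rewrite /mmul /mscale mulr_sumr; apply: eq_bigr => d _; by rewrite mulrCA. Qed.

Definition mprod n (F : 'I_n -> mat) : mat := \big[mmul/mid]_(i < n) F i.

Lemma mprodS n (F : 'I_n.+1 -> mat) : mprod F = mmul (F ord0) (mprod (fun i => F (lift ord0 i))).
Proof. by rewrite /mprod big_ord_recl. Qed.
Lemma mprod0 (F : 'I_0 -> mat) : mprod F = mid.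
Proof. by rewrite /mprod big_ord0. Qed.

Lemma mprod_scale n (c : 'I_n -> C) (F : 'I_n -> mat) :
  mprod (fun i => mscale (c i) (F i)) = mscale (\prod_i c i) (mprod F).
Proof.
elim: n c F => [|n IH] c F.
  by rewrite !mprod0 big_ord0; apply: matP => a b; rewrite /mscale mul1r.
rewrite !mprodS IH mmul_scalel mmul_scaler big_ord_recl.
by apply: matP => a b; rewrite /mscale mulrA.
Qed.

Lemma mprod_zero n (F : 'I_n -> mat) i : F i = mzero -> mprod F = mzero.
Proof.
elim: n F i => [|n IH] F i; first by case: i.
rewrite mprodS; case: (unliftP ord0 i) => [j|] -> h.
  by rewrite (IH _ j h) mmul0r.
by rewrite h mmul0l.
Qed.
End M1.

Section FF.
Variable K : finType.
Definition fcons n (k : K) (g : {ffun 'I_n -> K}) : {ffun 'I_n.+1 -> K} :=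
  [ffun i => if unlift ord0 i is Some j then g j else k].
Lemma fcons0 n k (g : {ffun 'I_n -> K}) : fcons k g ord0 = k.
Proof. by rewrite ffunE unlift_none. Qed.
Lemma fconsS n k (g : {ffun 'I_n -> K}) j : fcons k g (lift ord0 j) = g j.
Proof. by rewrite ffunE liftK. Qed.

Lemma sum_ffunS n (F : {ffun 'I_n.+1 -> K} -> C) :
  \sum_f F f = \sum_(k : K) \sum_(g : {ffun 'I_n -> K}) F (fcons k g).
Proof.
rewrite pair_big /=.
rewrite (reindex (fun p : K * {ffun 'I_n -> K} => fcons p.1 p.2)) //=.
exists (fun f : {ffun 'I_n.+1 -> K} => (f ord0, [ffun j => f (lift ord0 j)])).
  move=> [k g] _ /=; rewrite fcons0; congr (_, _); apply/ffunP => j; by rewrite ffunE fconsS.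
move=> f _ /=; apply/ffunP => i; rewrite ffunE.
by case: (unliftP ord0 i) => [j|] ->; rewrite ?ffunE.
Qed.

Lemma sum_ffun0 (F : {ffun 'I_0 -> K} -> C) : \sum_f F f = F (ffun0 (card_ord 0)).
Proof.
rewrite (big_pred1 (ffun0 (card_ord 0))) // => f /=.
by symmetry; apply/eqP/ffunP => -[].
Qed.
End FF.

Section Prod.
Variables (S K : finType).
Lemma mprod_sum n (A : 'I_n -> K -> mat S) :
  mprod (fun i => msum (A i)) = msum (fun f : {ffun 'I_n -> K} => mprod (fun i => A i (f i))).
Proof.
elim: n A => [|n IH] A.
  by rewrite mprod0; apply: matP => a b; rewrite /msum sum_ffun0 mprod0.
rewrite mprodS IH mmul_msuml; apply: matP => a b.
rewrite /msum sum_ffunS; apply: eq_bigr => k _.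
rewrite mmul_msumr /msum; apply: eq_bigr => g _.
rewrite mprodS fcons0; congr (mmul _ (mprod _) a b).
by apply: functional_extensionality => i; rewrite fconsS.
Qed.
End Prod.
End Mat.

Arguments mid {C S}.
Arguments mzero {C S}.
Section P.
Variables (C : comNzRingType) (S : finType).
Lemma inordS n i : (i < n.+1)%N -> (inord i.+1 : 'I_n.+2) = lift ord0 (inord i).
Proof. move=> h; apply: val_inj; rewrite /= /bump /= !inordK //. Qed.
Lemma inord0 n : (inord 0 : 'I_n.+1) = ord0.
Proof. by apply: val_inj; rewrite /= inordK. Qed.

Lemma path_mprod n (F : nat -> mat C S) a b :
  \sum_(g : {ffun 'I_n.+1 -> S} | (g ord0 == a) && (g ord_max == b))
     \prod_(j < n) F j (g (inord j)) (g (inord j.+1)) = mprod (fun j : 'I_n => F j) a b.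
Proof.
elim: n F a b => [|n IH] F a b.
  rewrite mprod0 /mid big_mkcond /= sum_ffunS.
  have -> : (ord_max : 'I_1) = ord0 by apply: val_inj.
  under eq_bigr do rewrite sum_ffun0 fcons0 big_ord0.
  rewrite (bigD1 a) //= eqxx /= big1 ?addr0; first by case: (a == b).
  by move=> k /negbTE ->.
rewrite big_mkcond /= sum_ffunS.
have -> : (ord_max : 'I_n.+2) = lift ord0 ord_max by apply: val_inj.
under eq_bigr => k _.
  under eq_bigr => g _.
    rewrite fcons0 fconsS big_ord_recl inord0 fcons0.
    rewrite (inordS (ltn0Sn n)) fconsS.
    under eq_bigr => j _.
      rewrite lift0 (inordS (leqW (ltn_ord j))) fconsS (inordS (ltn_ord j : (j.+1 < n.+1)%N)) fconsS.
    over.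
  over.
over.
simpl.
rewrite (bigD1 a) //= eqxx /= [X in _ + X]big1 ?addr0; last first.
  move=> k /negbTE kn; apply: big1 => g _; by rewrite kn.
rewrite mprodS /mmul.
under [RHS]eq_bigr => d _.
  rewrite -(IH (fun m => F m.+1)) big_distrr big_mkcond /=.
over.
rewrite /= exchange_big /=; apply: eq_bigr => g _.
rewrite [RHS](bigD1 (g ord0)) //= eqxx /= [X in _ + X]big1 ?addr0; last first.
  move=> d dn; have -> : (g ord0 == d) = false by apply/negbTE; rewrite eq_sym.
  by [].
rewrite inord0.
by case: (g ord_max == b).
Qed.
End P.
Section K.
Variables (C : comNzRingType) (S1 S2 : finType).
Definition kron (A : mat C S1) (B : mat C S2) : mat C (S1 * S2)%type :=
  fun p r => A p.1 r.1 * B p.2 r.2.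
Lemma kron_mul A B A' B' : mmul (kron A B) (kron A' B') = kron (mmul A A') (mmul B B').
Proof.
apply: matP => p r; rewrite /mmul /kron mulr_suml.
under [RHS]eq_bigr do rewrite mulr_sumr.
rewrite pair_bigA; apply: eq_bigr => -[i j] _ /=; by rewrite mulrACA.
Qed.
Lemma kron_id : kron (@mid C S1) (@mid C S2) = mid.
Proof.
apply: matP => -[a1 a2] [b1 b2]; rewrite /kron /mid /= xpair_eqE.
by case: (a1 == b1); case: (a2 == b2); rewrite /= ?mul1r ?mul0r.
Qed.
Lemma kron_mprod n (A : 'I_n -> mat C S1) (B : 'I_n -> mat C S2) :
  kron (mprod A) (mprod B) = mprod (fun i => kron (A i) (B i)).
Proof.
elim: n A B => [|n IH] A B; first by rewrite !mprod0 kron_id.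
by rewrite !mprodS -IH kron_mul.
Qed.
End K.

Section Low.
Variables (C : comNzRingType) (k : nat).
Definition lowm (A : mat C 'I_k) := forall a b : 'I_k, (a < b)%N -> A a b = 0.
Lemma low_mmul A B : lowm A -> lowm B -> lowm (mmul A B).
Proof.
move=> hA hB a b ab; rewrite /mmul big1 // => c _.
case: (ltnP a c) => ac; first by rewrite hA // mul0r.
by rewrite hB ?mulr0 // (leq_ltn_trans ac ab).
Qed.
Lemma low_mprod n (F : 'I_n -> mat C 'I_k) : (forall i, lowm (F i)) -> lowm (mprod F).
Proof.
elim: n F => [|n IH] F hF.
  rewrite mprod0 => a b ab; rewrite /mid.
  by have -> : (a == b) = false by apply/negbTE; rewrite -val_eqE /= neq_ltn ab.
rewrite mprodS; apply: low_mmul => //; exact: IH.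
Qed.
End Low.

Lemma foldr_perm (I : eqType) (T : Type) (op : T -> T -> T) (idx : T)
  (opA : associative op) (F : I -> T)
  (hc : forall i j, op (F i) (F j) = op (F j) (F i)) (l1 l2 : seq I) :
  perm_eq l1 l2 -> foldr op idx (map F l1) = foldr op idx (map F l2).
Proof.
have comm_fold : forall a (l : seq I) X, op (F a) (foldr op X (map F l)) = foldr op (op (F a) X) (map F l).
  move=> a; elim=> [|b l IH] X //=.
  by rewrite opA hc -opA IH.
elim: l1 l2 => [|a l1 IH] l2 hp.
  by move: (perm_size hp) => /=; case: l2 hp.
have ain : a \in l2 by rewrite -(perm_mem hp) mem_head.
have [l2a [l2b el2]] : exists l2a l2b, l2 = l2a ++ a :: l2b.
  exists (take (index a l2) l2), (drop (index a l2).+1 l2).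
  by rewrite -{1}(cat_take_drop (index a l2) l2) (drop_nth a) ?index_mem // nth_index.
subst l2.
have hp' : perm_eq l1 (l2a ++ l2b).
  by rewrite -(perm_cons a); apply: (perm_trans hp); rewrite -cat1s perm_catCA.
rewrite /= (IH _ hp') !map_cat !foldr_cat /= comm_fold.
by [].
Qed.

Lemma mprod_foldr (C : comNzRingType) (S : finType) n (F : 'I_n -> mat C S) :
  mprod F = foldr (@mmul C S) (@mid C S) (map F (index_enum 'I_n)).
Proof. by rewrite foldrE big_map. Qed.

Section Y.
Variables (C : numClosedFieldType) (q qh zeta zq1 zq2 : C).
Definition omul (a b : option C) := match a, b with Some x, Some y => Some (x * y) | _, _ => None end.
Definition oadd (a b : option C) := match a, b with None, _ => b | _, None => a | Some x, Some y => Some (x + y) end.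
Definition oval (a : option C) := if a is Some x then x else 0.
Definition osum3 (F : nat -> option C) := oadd (oadd (F 0%N) (F 1%N)) (F 2%N).
Definition oRt (x : C) (r c : nat) : option C :=
  match r, c with
  | 0, 0 => Some ((x - zeta) * (x - q ^+ 2))
  | 1, 1 => Some (q * (x - 1) * (x - zeta)) | 1, 3 => Some ((1 - q ^+ 2) * (x - zeta))
  | 2, 2 => Some ((x - 1) * ((x - zeta) + x * (q ^+ 2 - 1)))
  | 2, 4 => Some ((q ^+ 2 - 1) * (zq1 * (x - 1)))
  | 2, 6 => Some ((q ^+ 2 - 1) * (zq2 * (x - 1) - (x - zeta)))
  | 3, 1 => Some (x * (1 - q ^+ 2) * (x - zeta)) | 3, 3 => Some (q * (x - 1) * (x - zeta))
  | 4, 2 => Some (x * (q ^+ 2 - 1) * ((x - 1) * qh))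
  | 4, 4 => Some (q * (x - 1) * (x - zeta) + x * (q ^+ 2 - 1) * (zeta - 1))
  | 4, 6 => Some ((q ^+ 2 - 1) * (zq1 * (x - 1)))
  | 5, 5 => Some (q * (x - 1) * (x - zeta)) | 5, 7 => Some ((1 - q ^+ 2) * (x - zeta))
  | 6, 2 => Some (x * (q ^+ 2 - 1) * ((x - 1) * qh ^+ 2 - (x - zeta)))
  | 6, 4 => Some (x * (q ^+ 2 - 1) * ((x - 1) * qh))
  | 6, 6 => Some ((x - 1) * ((x - zeta) + x * (q ^+ 2 - 1)))
  | 7, 5 => Some (x * (1 - q ^+ 2) * (x - zeta)) | 7, 7 => Some (q * (x - 1) * (x - zeta))
  | 8, 8 => Some ((x - zeta) * (x - q ^+ 2))
  | _, _ => None
  end.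
Definition oYBE := forall (z v : C) (s t c d e f : nat), (s < 3)%N -> (t < 3)%N -> (c < 3)%N -> (d < 3)%N -> (e < 3)%N -> (f < 3)%N ->
  oval (osum3 (fun c1 => osum3 (fun d1 => omul (oRt z (3 * c + d) (3 * c1 + d1))
     (osum3 (fun k => omul (oRt (z * v) (3 * c1 + s) (3 * e + k)) (oRt v (3 * d1 + k) (3 * f + t)))))))
 = oval (osum3 (fun e1 => osum3 (fun f1 => omul (osum3 (fun k => omul (oRt (z * v) (3 * c + k) (3 * e1 + t)) (oRt v (3 * d + s) (3 * f1 + k))))
     (oRt z (3 * e1 + f1) (3 * e + f))))).
End Y.
Lemma ybe_FZ (C : numClosedFieldType) (qh : C) : @oYBE C (qh ^+ 2) qh (qh ^+ 2) qh 1.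
Proof. move=> z v s t c d e f;
case: s => [|[|[|//]]] _; case: t => [|[|[|//]]] _;
case: c => [|[|[|//]]] _; case: d => [|[|[|//]]] _;
case: e => [|[|[|//]]] _; case: f => [|[|[|//]]] _;
cbv beta iota zeta delta [oval osum3 omul oadd oRt muln muln_rec addn addn_rec Nat.add Nat.mul]; ring. Qed.
Lemma ybe_IK (C : numClosedFieldType) (qh : C) : @oYBE C (qh ^+ 2) qh (- (qh ^+ 2) ^+ 3) (- qh ^+ 5) (- qh ^+ 4).
Proof. move=> z v s t c d e f;
case: s => [|[|[|//]]] _; case: t => [|[|[|//]]] _;
case: c => [|[|[|//]]] _; case: d => [|[|[|//]]] _;
case: e => [|[|[|//]]] _; case: f => [|[|[|//]]] _;
cbv beta iota zeta delta [oval osum3 omul oadd oRt muln muln_rec addn addn_rec Nat.add Nat.mul]; ring. Qed.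

Arguments mid {C S}.
Arguments mzero {C S}.
Section RE.
Variables (C : numClosedFieldType) (q qh zeta : C).
Lemma ez' (a b : nat) : (b <= a)%N -> qh ^ (a%:Z - b%:Z) = qh ^+ (a - b).
Proof. move=> ab. by rewrite subzn. Qed.
Definition zq1 := zeta * qh ^ (1%:Z - 2%:Z).
Definition zq2 := zeta * qh ^ (1%:Z - 3%:Z).
Lemma RmatE x r c : Rmat q qh zeta x r c = oval (oRt q qh zeta zq1 zq2 x r c).
Proof.
rewrite /zq1 /zq2.
case: r => [|[|[|[|[|[|[|[|[|r]]]]]]]]]; case: c => [|[|[|[|[|[|[|[|[|c]]]]]]]]];
rewrite /Rmat /Rd /=.
all: try reflexivity.
all: rewrite ?(@ez' 2 1) ?(@ez' 3 1) ?(@ez' 3 2) //; ring.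
Qed.
Lemma ez1 : qh ^ (1%:Z - 2%:Z) = qh^-1.
Proof. by rewrite -opprB subzn // -invr_expz. Qed.
Lemma ez2 : qh ^ (1%:Z - 3%:Z) = (qh ^+ 2)^-1.
Proof. by rewrite -opprB subzn // -invr_expz. Qed.
Lemma oYBE_inst : qh != 0 -> qh ^+ 2 = q -> (zeta = q \/ zeta = - q ^+ 3) -> oYBE q qh zeta zq1 zq2.
Proof.
move=> qh0 hq hz; rewrite /zq1 /zq2 ez1 ez2; subst q.
case: hz => ->.
  have -> : qh ^+ 2 * qh^-1 = qh by field.
  have -> : qh ^+ 2 * (qh ^+ 2)^-1 = 1 by field.
  exact: ybe_FZ.
have -> : - (qh ^+ 2) ^+ 3 * qh^-1 = - qh ^+ 5 by field.
have -> : - (qh ^+ 2) ^+ 3 * (qh ^+ 2)^-1 = - qh ^+ 4 by field.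
exact: ybe_IK.
Qed.
End RE.
Section Coef.
Variables (C : numClosedFieldType) (q qh zeta zq1 zq2 : C).
Definition ocoef (e : nat) r c : C :=
  let f0 := oval (oRt q qh zeta zq1 zq2 0 r c) in
  let fp := oval (oRt q qh zeta zq1 zq2 1 r c) in
  let fm := oval (oRt q qh zeta zq1 zq2 (-1) r c) in
  match e with 0 => f0 | 1 => (fp - fm) / 2%:R | _ => (fp + fm) / 2%:R - f0 end.
Lemma two_neq0 : (2%:R : C) != 0.
Proof. by rewrite pnatr_eq0. Qed.
Lemma oRt_quad x r c : oval (oRt q qh zeta zq1 zq2 x r c) = \sum_(e < 3) x ^+ e * ocoef e r c.
Proof.
rewrite !big_ord_recr big_ord0 /= /ocoef.
have h2 := two_neq0.
case: r => [|[|[|[|[|[|[|[|[|r]]]]]]]]]; case: c => [|[|[|[|[|[|[|[|[|c]]]]]]]]];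
cbv beta iota zeta delta [oval oRt]; field; done.
Qed.
Lemma ocoef2_low (a b i k : nat) : (a < b)%N -> (b < 3)%N -> (i < 3)%N -> (k < 3)%N ->
  ocoef 2 (3 * a + i) (3 * b + k) = 0.
Proof.
rewrite /ocoef.
have h2 := two_neq0.
case: a => [|[|[|a]]]; case: b => [|[|[|b]]] // _ _;
case: i => [|[|[|i]]] // _; case: k => [|[|[|k]]] // _;
cbv beta iota zeta delta [oval oRt muln muln_rec addn addn_rec Nat.add Nat.mul]; field; done.
Qed.
End Coef.

Arguments mid {C S}.
Arguments mzero {C S}.
Section Main.
Variables (C : numClosedFieldType) (q qh zeta : C) (n : nat) (w : 'I_n.+1 -> C).
Local Notation L := n.+1.
Definition i0 : 'I_3 := inord 0.
Definition i2 : 'I_3 := inord 2.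
Lemma i0E : (i0 : nat) = 0%N. Proof. by rewrite /i0 inordK. Qed.
Lemma i2E : (i2 : nat) = 2%N. Proof. by rewrite /i2 inordK. Qed.
Definition Nz (z : C) (i k : 'I_3) : mat C 'I_3 := fun a b => Rent q qh zeta z a i b k.
Definition Ex x : mat C (state L) := Eop q qh zeta w x.
Definition ENz (X : 'I_L -> C) : mat C (state L) :=
  fun s t => mprod (fun j => Nz (X j) (s j) (t j)) i0 i2.

Lemma Tent_mprod x al be s t :
  Tent q qh zeta w x al be s t = mprod (fun j => Nz (x / w j) (s j) (t j)) al be.
Proof.
pose F := fun m : nat => Nz (x / w (inord m)) (s (inord m)) (t (inord m)).
have e : (fun j : 'I_L => F j) = (fun j => Nz (x / w j) (s j) (t j)).
  by apply: functional_extensionality => j; rewrite /F inord_val.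
rewrite -e -path_mprod /Tent; apply: eq_bigr => g _; apply: eq_bigr => j _.
by rewrite /F /Nz inord_val.
Qed.

Lemma Ex_ENz x : Ex x = ENz (fun j => x / w j).
Proof. by apply: matP => s t; rewrite /Ex /Eop Tent_mprod. Qed.

Lemma EE (X Y : 'I_L -> C) s t : mmul (ENz X) (ENz Y) s t =
  mprod (fun j => msum (fun v : 'I_3 => kron (Nz (X j) (s j) v) (Nz (Y j) v (t j)))) (i0, i0) (i2, i2).
Proof.
rewrite mprod_sum /msum /mmul; apply: eq_bigr => u _.
by rewrite -kron_mprod /kron /=.
Qed.

Lemma EE' (X Y : 'I_L -> C) s t : mmul (ENz Y) (ENz X) s t =
  mprod (fun j => msum (fun v : 'I_3 => kron (Nz (X j) v (t j)) (Nz (Y j) (s j) v))) (i0, i0) (i2, i2).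
Proof.
rewrite mprod_sum /msum /mmul; apply: eq_bigr => u _.
by rewrite -kron_mprod /kron /= mulrC.
Qed.

Definition Rm z : mat C ('I_3 * 'I_3)%type := fun p r => Rent q qh zeta z p.1 p.2 r.1 r.2.

Lemma RmatF : Rmat q qh zeta = fun x r c => oval (oRt q qh zeta (zq1 qh zeta) (zq2 qh zeta) x r c).
Proof. by apply: functional_extensionality => x; apply: functional_extensionality => r; apply: functional_extensionality => c; rewrite RmatE. Qed.

Lemma ovalA (a b : option C) : oval (oadd a b) = oval a + oval b.
Proof. by case: a; case: b => //= *; rewrite ?addr0 ?add0r. Qed.
Lemma ovalM (a b : option C) : oval (omul a b) = oval a * oval b.
Proof. by case: a; case: b => //= *; rewrite ?mulr0 ?mul0r. Qed.

Lemma sum_pair3 (F : ('I_3 * 'I_3)%type -> C) : \sum_p F p = \sum_(i < 3) \sum_(j < 3) F (i, j).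
Proof. by rewrite pair_bigA; apply: eq_bigr => -[]. Qed.

Lemma sum3o (F : 'I_3 -> C) :
  \sum_(i < 3) F i = F (@Ordinal 3 0 isT) + F (@Ordinal 3 1 isT) + F (@Ordinal 3 2 isT).
Proof.
rewrite !big_ord_recr big_ord0 /= add0r.
by congr (F _ + F _ + F _); apply: val_inj.
Qed.

Lemma ybe_mat (hY : oYBE q qh zeta (zq1 qh zeta) (zq2 qh zeta)) z v i k :
  mmul (Rm z) (msum (fun e => kron (Nz (z * v) i e) (Nz v e k))) =
  mmul (msum (fun e => kron (Nz (z * v) e k) (Nz v i e))) (Rm z).
Proof.
apply: matP => -[c d] [e f].
have := hY z v i k c d e f (ltn_ord i) (ltn_ord k) (ltn_ord c) (ltn_ord d) (ltn_ord e) (ltn_ord f).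
rewrite /osum3; cbv beta; rewrite !(ovalA, ovalM) => key.
rewrite /mmul /msum /kron /Rm /Nz /Rent RmatF.
rewrite !sum_pair3 !sum3o.
cbv beta.
exact: key.
Qed.

Lemma mmul_comm_prod (S : finType) m (R : mat C S) (W W' : 'I_m -> mat C S) :
  (forall j, mmul R (W j) = mmul (W' j) R) -> mmul R (mprod W) = mmul (mprod W') R.
Proof.
elim: m W W' => [|m IH] W W' h; first by rewrite !mprod0 mmul1r mmul1l.
rewrite !mprodS mmulA h -mmulA (IH (fun i => W (lift ord0 i)) (fun i => W' (lift ord0 i))); last by move=> j; exact: h.
by rewrite mmulA.
Qed.

Lemma Rmat_row0 x m : m != 0%N -> Rmat q qh zeta x 0 m = 0.
Proof. by case: m. Qed.
Lemma Rmat_col8 x m : (m < 8)%N -> Rmat q qh zeta x m 8 = 0.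
Proof. by case: m => [|[|[|[|[|[|[|[|m]]]]]]]]. Qed.
Lemma Rent00 z : Rent q qh zeta z i0 i0 i0 i0 = (z - zeta) * (z - q ^+ 2).
Proof. by rewrite /Rent i0E. Qed.
Lemma Rent22 z : Rent q qh zeta z i2 i2 i2 i2 = (z - zeta) * (z - q ^+ 2).
Proof. by rewrite /Rent i2E. Qed.

Lemma Rm_row z M b : mmul (Rm z) M (i0, i0) b = (z - zeta) * (z - q ^+ 2) * M (i0, i0) b.
Proof.
rewrite /mmul (bigD1 (i0, i0)) //= -Rent00 big1 ?addr0 // => -[c d] /= ne.
rewrite /Rm /Rent /= i0E Rmat_row0 ?mul0r //.
move: ne; rewrite xpair_eqE -!val_eqE /= i0E.
by case: (nat_of_ord c) => [|c'] //; case: (nat_of_ord d).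
Qed.

Lemma Rm_col z M a : mmul M (Rm z) a (i2, i2) = M a (i2, i2) * ((z - zeta) * (z - q ^+ 2)).
Proof.
rewrite /mmul (bigD1 (i2, i2)) //= -Rent22 big1 ?addr0 // => -[c d] /= ne.
rewrite /Rm /Rent /= i2E Rmat_col8 ?mulr0 //.
move: ne; rewrite xpair_eqE -!val_eqE /= i2E.
have := ltn_ord c; have := ltn_ord d.
case: (nat_of_ord c) => [|[|[|//]]]; case: (nat_of_ord d) => [|[|[|//]]] //.
Qed.

Lemma comm_gen (hY : oYBE q qh zeta (zq1 qh zeta) (zq2 qh zeta)) x y :
  y != 0 -> (forall j, w j != 0) -> forall s t,
  (x / y - zeta) * (x / y - q ^+ 2) * mmul (Ex x) (Ex y) s t =
  mmul (Ex y) (Ex x) s t * ((x / y - zeta) * (x / y - q ^+ 2)).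
Proof.
move=> y0 w0 s t.
have hx : (fun j => x / w j) = (fun j => (x / y) * (y / w j)).
  by apply: functional_extensionality => j; rewrite mulrA divfK.
rewrite !Ex_ENz hx EE EE' -Rm_row -Rm_col.
congr (_ _ _); apply: mmul_comm_prod => j; exact: ybe_mat.
Qed.
End Main.

Arguments mid {C S}.
Arguments mzero {C S}.
Section Poly.
Variables (C : numClosedFieldType) (q qh zeta : C) (n : nat) (w : 'I_n.+1 -> C).
Local Notation L := n.+1.
Definition Ncf (e : nat) (i k : 'I_3) : mat C 'I_3 :=
  fun a b => ocoef q qh zeta (zq1 qh zeta) (zq2 qh zeta) e (3 * a + i) (3 * b + k).
Lemma Nz_exp z i k : Nz q qh zeta z i k = msum (fun e : 'I_3 => mscale (z ^+ e) (Ncf e i k)).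
Proof. by apply: matP => a b; rewrite /Nz /Rent RmatE oRt_quad. Qed.

Definition cE (f : {ffun 'I_L -> 'I_3}) : mat C (state L) :=
  fun s t => (\prod_j (w j)^-1 ^+ nat_of_ord (f j)) * mprod (fun j => Ncf (f j) (s j) (t j)) i0 i2.
Definition deg (f : {ffun 'I_L -> 'I_3}) : nat := (\sum_(j < L) nat_of_ord (f j))%N.

Lemma Eexp x : Ex q qh zeta w x = msum (fun f : {ffun 'I_L -> 'I_3} => mscale (x ^+ deg f) (cE f)).
Proof.
rewrite Ex_ENz; apply: matP => s t; rewrite /ENz.
have -> : (fun j => Nz q qh zeta (x / w j) (s j) (t j)) =
   (fun j => msum (fun e : 'I_3 => mscale ((x / w j) ^+ e) (Ncf e (s j) (t j)))).
  by apply: functional_extensionality => j; rewrite Nz_exp.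
rewrite mprod_sum /msum /mscale; apply: eq_bigr => f _.
rewrite mprod_scale /mscale /cE mulrA; congr (_ * _).
under eq_bigr do rewrite exprMn.
by rewrite big_split /= prodrXr.
Qed.

Lemma cE_top (f : {ffun 'I_L -> 'I_3}) : (forall j, nat_of_ord (f j) = 2%N) -> cE f = mzero.
Proof.
move=> hf; apply: matP => s t; rewrite /cE /mzero.
rewrite (low_mprod (F := fun j => Ncf (f j) (s j) (t j))) ?mulr0 //; last by rewrite i0E i2E.
move=> j a b ab; rewrite /Ncf hf.
by rewrite (ocoef2_low _ _ _ _ _ ab (ltn_ord b) (ltn_ord _) (ltn_ord _)).
Qed.

Lemma comm_all (hY : oYBE q qh zeta (zq1 qh zeta) (zq2 qh zeta)) (w0 : forall j, w j != 0) x y :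
  y != 0 -> mmul (Ex q qh zeta w x) (Ex q qh zeta w y) = mmul (Ex q qh zeta w y) (Ex q qh zeta w x).
Proof.
move=> y0; apply: matP => s t.
pose Ey := Ex q qh zeta w y.
pose p : {poly C} := \sum_(u : state L) \sum_(f : {ffun 'I_L -> 'I_3})
   ((cE f s u * Ey u t - Ey s u * cE f u t) *: 'X^(deg f)).
have hp : forall x0, p.[x0] = mmul (Ex q qh zeta w x0) Ey s t - mmul Ey (Ex q qh zeta w x0) s t.
  move=> x0; rewrite /p horner_sum /mmul -sumrB; apply: eq_bigr => u _.
  rewrite horner_sum (Eexp x0) /msum /mscale mulr_suml mulr_sumr -sumrB; apply: eq_bigr => f _.
  rewrite hornerZ hornerXn; ring.
have hz : forall x0, (x0 / y - zeta) * (x0 / y - q ^+ 2) != 0 -> p.[x0] = 0.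
  move=> x0 nz; rewrite hp; apply/eqP; rewrite subr_eq0; apply/eqP.
  apply: (mulfI nz); rewrite comm_gen // mulrC //.
pose p2 := p * ('X - (zeta * y)%:P) * ('X - (q ^+ 2 * y)%:P).
have all0 : forall x0, p2.[x0] = 0.
  move=> x0; rewrite !hornerM !hornerXsubC.
  case: (eqVneq ((x0 / y - zeta) * (x0 / y - q ^+ 2)) 0) => [e|nz]; last by rewrite hz // !mul0r.
  move/eqP: e; rewrite mulf_eq0 => /orP[] /eqP e.
    have -> : x0 - zeta * y = 0 by rewrite -{1}(divfK y0 x0) -mulrBl e mul0r.
    by rewrite mulr0 mul0r.
  have -> : x0 - q ^+ 2 * y = 0 by rewrite -{1}(divfK y0 x0) -mulrBl e mul0r.
  by rewrite mulr0.
have p20 : p2 = 0.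
  apply: (roots_geq_poly_eq0 (rs := [seq i%:R | i <- iota 0 (size p2)])).
  - by apply/allP => r _; rewrite /root all0.
  - rewrite map_inj_uniq ?iota_uniq // => i j /eqP; rewrite eqr_nat => /eqP //.
  - by rewrite size_map size_iota.
have p0 : p = 0.
  move/eqP: p20; rewrite /p2 !mulf_eq0 !polyXsubC_eq0 !orbF => /eqP //.
apply/eqP; rewrite -subr_eq0 -hp p0 horner0 //.
Qed.
End Poly.

Arguments mid {C S}.
Arguments mzero {C S}.

Section Fin.
Variables (C : numClosedFieldType) (q qh zeta : C) (n : nat) (w : 'I_n.+1 -> C).
Local Notation L := n.+1.

Lemma PF_mprod (x : 'I_L -> C) :
  PF q qh zeta w x = mprod (fun i => Ex q qh zeta w (x (rev_ord i))) (dvac L) (vac L).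
Proof. by []. Qed.

Definition cK (k : {ffun 'I_L -> {ffun 'I_L -> 'I_3}}) : C :=
  mprod (fun i => cE q qh zeta w (k i)) (dvac L) (vac L).

Lemma PF_exp (x : 'I_L -> C) :
  PF q qh zeta w x = \sum_(k : {ffun 'I_L -> {ffun 'I_L -> 'I_3}})
      (\prod_i x (rev_ord i) ^+ deg (k i)) * cK k.
Proof.
rewrite PF_mprod.
have -> : (fun i => Ex q qh zeta w (x (rev_ord i))) =
   (fun i => msum (fun f => mscale (x (rev_ord i) ^+ deg f) (cE q qh zeta w f))).
  by apply: functional_extensionality => i; rewrite Eexp.
rewrite mprod_sum /msum; apply: eq_bigr => k _.
by rewrite mprod_scale.
Qed.

Lemma deg_top (f : {ffun 'I_L -> 'I_3}) : (2 * L <= deg f)%N -> forall j, nat_of_ord (f j) = 2%N.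
Proof.
move=> h j.
have hsum : (deg f + \sum_(k < L) (2 - f k) = 2 * L)%N.
  rewrite /deg -big_split /= (eq_bigr (fun _ => 2%N)); last first.
    by move=> k _; rewrite subnKC // -ltnS ltn_ord.
  by rewrite big_const_ord iter_addn_0 mulnC.
move: hsum; rewrite (bigD1 j) //= => hsum.
have := ltn_ord (f j).
lia.
Qed.
End Fin.

Theorem lemma2p1 (C : numClosedFieldType) (q qh zeta : C) (L : nat)
    (w : 'I_L -> C) :
  q != 0 -> qh ^+ 2 = q -> (zeta = q \/ zeta = - q ^+ 3) ->
  (0 < L)%N -> (forall j, w j != 0) ->
  (exists P : {mpoly C[L]},
     (forall x : 'I_L -> C, (forall i, x i != 0) ->
        PF q qh zeta w x = P.@[x]) /\
     (forall m, m \in msupp P -> forall i : 'I_L, (m i <= 2 * L - 1)%N)) /\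
  (forall (s : 'S_L) (x : 'I_L -> C), (forall i, x i != 0) ->
     PF q qh zeta w (fun i => x (s i)) = PF q qh zeta w x).
Proof.
move=> q0 hq hz L0 w0.
have qh0 : qh != 0 by apply: contra_neq q0 => e; rewrite -hq e expr2 mul0r.
have hY := oYBE_inst qh0 hq hz.
case: L w w0 L0 => [//|n] w w0 _.
split.
  pose mon (k : {ffun 'I_n.+1 -> {ffun 'I_n.+1 -> 'I_3}}) : 'X_{1..n.+1} :=
    [multinom deg (k (rev_ord i)) | i < n.+1].
  exists (\sum_k cK q qh zeta w k *: 'X_[mon k]).
  split.
    move=> x _; rewrite PF_exp raddf_sum; apply: eq_bigr => k _.
    change (\prod_i x (rev_ord i) ^+ deg (k i) * cK q qh zeta w k = meval x (cK q qh zeta w k *: 'X_[mon k])).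
    rewrite mevalZ mevalX mulrC; congr (_ * _).
    rewrite (reindex_inj rev_ord_inj) /=; apply: eq_bigr => i _.
    by rewrite mnmE rev_ordK.
  move=> m; rewrite mcoeff_msupp => nz i; apply: contraNT nz; rewrite -ltnNge => hi.
  rewrite raddf_sum big1 // => k _.
  change (mcoeff m (cK q qh zeta w k *: 'X_[mon k]) = 0).
  rewrite mcoeffZ mcoeffX.
  case: (eqVneq (mon k) m) => [e|]; last by rewrite mulr0.
  have hd : (2 * n.+1 <= deg (k (rev_ord i)))%N.
    by move: hi; rewrite -e /mon mnmE mulnS add2n subn1.
  rewrite /cK (mprod_zero (i := rev_ord i)) ?mul0r //.
  exact: cE_top (deg_top hd).
move=> s x x0.
rewrite !PF_mprod !mprod_foldr.
have e1 : [seq Ex q qh zeta w (x (s (rev_ord i))) | i <- index_enum 'I_n.+1] =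
   [seq Ex q qh zeta w (x k) | k <- [seq s (rev_ord i) | i <- index_enum 'I_n.+1]].
  by rewrite -map_comp.
have e2 : [seq Ex q qh zeta w (x (rev_ord i)) | i <- index_enum 'I_n.+1] =
   [seq Ex q qh zeta w (x k) | k <- [seq rev_ord i | i <- index_enum 'I_n.+1]].
  by rewrite -map_comp.
rewrite e1 e2; congr (_ (dvac _) (vac _)); apply: foldr_perm.
- exact: mmulA.
- move=> i j; apply: comm_all => //; exact: x0.
apply: uniq_perm.
- rewrite map_inj_uniq ?index_enum_uniq // => i j /perm_inj; exact: rev_ord_inj.
- rewrite map_inj_uniq ?index_enum_uniq //; exact: rev_ord_inj.
move=> i; apply/idP/idP => _.
  apply/mapP; exists (rev_ord i); first by rewrite mem_index_enum.
  by rewrite rev_ordK.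
apply/mapP; exists (rev_ord ((s^-1)%g i)); first by rewrite mem_index_enum.
by rewrite /= rev_ordK permKV.
Qed.
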